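(* Let $X$ be a topological space with a finite cover $\mathcal S$, $\Gamma$ a family of curves in $X$, and $1\le p\le q$. Then for every $\varepsilon>0$, $$\mathrm{mod}_q(\Gamma,\mathcal S)\le\Big(\varepsilon^{q-p}+\frac1{\varepsilon^p}\sup_{s\in\mathcal S}\mathrm{mod}_q(\Gamma(s),\mathcal S)\Big)\mathrm{mod}_p(\Gamma,\mathcal S),$$ where $\Gamma(s)$ denotes the subfamily of curves of $\Gamma$ which meet $s$.
   Context: Combinatorial modulus: for a cover $\mathcal S$ and $p\ge1$, $\mathcal M_p(\mathcal S)$ is the set of functions $\rho:\mathcal S\to[0,\infty)$ with $0<\sum_s\rho(s)^p<\infty$. For $K\subset X$, $\mathcal S(K)$ is the set of elements of $\mathcal S$ meeting $K$ and $\ell_\rho(K)=\sum_{s\in\mathcal S(K)}\rho(s)$; $V_p(\rho)=\sum_{s\in\mathcal S}\rho(s)^p$; $L_\rho(\Gamma,\mathcal S)=\inf_{\gamma\in\Gamma}\ell_\rho(\gamma)$; and $\mathrm{mod}_p(\Gamma,\mathcal S)=\inf_{\rho\in\mathcal M_p(\mathcal S)}V_p(\rho)/L_\rho(\Gamma,\mathcal S)^p$. *)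

(* Defs.v *)
From Stdlib Require Import Reals List Classical ClassicalEpsilon.
Import ListNotations.
Open Scope R_scope.

Record TopSpace := {
  carrier :> Type;
  is_open : (carrier -> Prop) -> Prop;
  open_full : is_open (fun _ => True);
  open_empty : is_open (fun _ => False);
  open_inter : forall U V, is_open U -> is_open V -> is_open (fun x => U x /\ V x);
  open_union : forall (F : (carrier -> Prop) -> Prop),
      (forall U, F U -> is_open U) -> is_open (fun x => exists U, F U /\ U x)
}.

Definition unit_interval (t : R) : Prop := 0 <= t <= 1.

(** A curve in X: a map [0,1] -> X (represented as R -> X, only values on
    [0,1] matter) which is continuous for the subspace topology of [0,1]. *)
Definition is_curve (X : TopSpace) (g : R -> X) : Prop :=
  forall U : X -> Prop, is_open X U ->
    forall t, unit_interval t -> U (g t) ->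
      exists d, 0 < d /\ forall t', unit_interval t' -> Rabs (t' - t) < d -> U (g t').

Definition meets {X : Type} (g : R -> X) (s : X -> Prop) : Prop :=
  exists t, unit_interval t /\ s (g t).

Definition finite_cover {X : Type} (S : list (X -> Prop)) : Prop :=
  NoDup S /\ forall x : X, exists s, In s S /\ s x.

(** Real power x^p for x >= 0, with 0^p = 0 (p >= 1). *)
Definition rpow (x p : R) : R := if Rle_dec x 0 then 0 else Rpower x p.

(** Infimum of a set of reals (classical choice; meaningful when it exists). *)
Definition is_glb (E : R -> Prop) (m : R) : Prop :=
  (forall x, E x -> m <= x) /\ (forall b, (forall x, E x -> b <= x) -> b <= m).
Definition Rinf (E : R -> Prop) : R := epsilon (inhabits 0) (is_glb E).

Section Modulus.
Context {X : TopSpace} (S : list (X -> Prop)).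

Definition sumS (f : (X -> Prop) -> R) : R := fold_right (fun s acc => f s + acc) 0 S.

Definition Vp (p : R) (rho : (X -> Prop) -> R) : R := sumS (fun s => rpow (rho s) p).

(** rho in M_p(S): rho >= 0 on S and 0 < V_p(rho) < oo (finite sum). *)
Definition in_Mp (p : R) (rho : (X -> Prop) -> R) : Prop :=
  (forall s, In s S -> 0 <= rho s) /\ 0 < Vp p rho.

Definition ell (rho : (X -> Prop) -> R) (g : R -> X) : R :=
  sumS (fun s => if excluded_middle_informative (meets g s) then rho s else 0).

Definition Lrho (rho : (X -> Prop) -> R) (Gam : (R -> X) -> Prop) : R :=
  Rinf (fun l => exists g, Gam g /\ l = ell rho g).

(** mod_p(Gamma,S) = inf_{rho in M_p} V_p(rho)/L_rho^p.  Conventions: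
    if Gamma is empty, L_rho = +oo and every ratio is 0, so mod_p = 0;
    ratios with L_rho = 0 equal +oo and do not contribute to the infimum. *)
Definition modp (p : R) (Gam : (R -> X) -> Prop) : R :=
  if excluded_middle_informative (exists g, Gam g) then
    Rinf (fun r => exists rho, in_Mp p rho /\ 0 < Lrho rho Gam /\
                              r = Vp p rho / Rpower (Lrho rho Gam) p)
  else 0.

Definition subfam (Gam : (R -> X) -> Prop) (s : X -> Prop) : (R -> X) -> Prop :=
  fun g => Gam g /\ meets g s.

(** sup over the (finite) s in S of f s; all values used here are >= 0,
    so taking the max together with 0 is the supremum (0 if S is empty). *)
Definition supS (f : (X -> Prop) -> R) : R := fold_right (fun s acc => Rmax (f s) acc) 0 S.

End Modulus.

(* Main.v *)
Require Import Defs.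
From Stdlib Require Import Reals List Lra Classical ClassicalEpsilon.
Open Scope R_scope.

Section L.
Context {A : Type}.
Definition sumL (l : list A) (f : A -> R) : R := fold_right (fun s acc => f s + acc) 0 l.

Lemma sumL_le l f g : (forall x, In x l -> f x <= g x) -> sumL l f <= sumL l g.
Proof. induction l; simpl; intros H. lra. assert (f a <= g a) by auto.
 assert (sumL l f <= sumL l g) by auto. lra. Qed.
Lemma sumL_nonneg l f : (forall x, In x l -> 0 <= f x) -> 0 <= sumL l f.
Proof. induction l; simpl; intros H. lra. assert (0 <= f a) by auto.
 assert (0 <= sumL l f) by auto. lra. Qed.
Lemma sumL_scal l f c : sumL l (fun x => c * f x) = c * sumL l f.
Proof. induction l; simpl. ring. rewrite IHl. ring. Qed.
Lemma sumL_add l f g : sumL l (fun x => f x + g x) = sumL l f + sumL l g.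
Proof. induction l; simpl. ring. rewrite IHl. ring. Qed.
Lemma sumL_ext l f g : (forall x, In x l -> f x = g x) -> sumL l f = sumL l g.
Proof. induction l; simpl; intros H. auto. rewrite (H a), IHl; auto. Qed.
Lemma sumL_ge_term l f y : (forall x, In x l -> 0 <= f x) -> In y l -> f y <= sumL l f.
Proof. induction l; simpl; intros H Hy. contradiction.
 destruct Hy as [<-|Hy].
 - assert (0 <= sumL l f) by (apply sumL_nonneg; auto). lra.
 - assert (0 <= f a) by auto. assert (f y <= sumL l f) by auto. lra. Qed.
Lemma sumL_zero l : sumL l (fun _ => 0) = 0.
Proof. induction l; simpl; auto. rewrite IHl; ring. Qed.
End L.

Lemma sumL_swap {A B : Type} (l1 : list A) (l2 : list B) (h : A -> B -> R) :
  sumL l1 (fun x => sumL l2 (fun y => h x y)) = sumL l2 (fun y => sumL l1 (fun x => h x y)).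
Proof. induction l1; simpl. now rewrite sumL_zero.
 rewrite IHl1. now rewrite <- sumL_add. Qed.

Definition supL {A} (l : list A) (f : A -> R) := fold_right (fun s acc => Rmax (f s) acc) 0 l.
Lemma supL_nonneg {A} (l : list A) f : 0 <= supL l f.
Proof. induction l; simpl. lra. eapply Rle_trans; [exact IHl| apply Rmax_r]. Qed.
Lemma supL_ge {A} (l : list A) f y : In y l -> f y <= supL l f.
Proof. induction l; simpl; intros Hy. contradiction. destruct Hy as [<-|Hy].
 apply Rmax_l. eapply Rle_trans; [apply IHl; auto| apply Rmax_r]. Qed.

Lemma Rpower_pos x y : 0 < Rpower x y.
Proof. unfold Rpower; apply exp_pos. Qed.
Lemma Rpower_1base p : Rpower 1 p = 1.
Proof. unfold Rpower. rewrite ln_1, Rmult_0_r. apply exp_0. Qed.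

Lemma rpow_0 p : rpow 0 p = 0.
Proof. unfold rpow. destruct (Rle_dec 0 0); lra. Qed.
Lemma rpow_pos x p : 0 < x -> rpow x p = Rpower x p.
Proof. intros. unfold rpow. destruct (Rle_dec x 0); [lra|auto]. Qed.
Lemma rpow_nonneg x p : 0 <= rpow x p.
Proof. unfold rpow. destruct (Rle_dec x 0). lra. left; apply Rpower_pos. Qed.
Lemma rpow_le x y p : 0 <= p -> 0 <= x <= y -> rpow x p <= rpow y p.
Proof. intros Hp [H0 H1]. destruct H0 as [H0| <-].
 rewrite !rpow_pos by lra. apply Rle_Rpower_l; lra.
 rewrite rpow_0; apply rpow_nonneg. Qed.
Lemma rpow_max a b q : rpow (Rmax a b) q <= rpow a q + rpow b q.
Proof. pose proof (rpow_nonneg a q); pose proof (rpow_nonneg b q).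
 unfold Rmax; destruct (Rle_dec a b); lra. Qed.
Lemma rpow_div x L p : 0 < L -> 0 <= x -> rpow (x / L) p = rpow x p / Rpower L p.
Proof. intros HL [Hx| <-].
 - rewrite !rpow_pos; [|lra| apply Rdiv_lt_0_compat; lra].
   unfold Rdiv. rewrite <- Rpower_mult_distr by (auto; apply Rinv_0_lt_compat; lra).
   f_equal. unfold Rpower. rewrite ln_Rinv by lra. rewrite <- exp_Ropp. f_equal; ring.
 - unfold Rdiv. rewrite Rmult_0_l, rpow_0. ring. Qed.
Lemma rpow_small x e p q : 0 <= p <= q -> 0 <= x <= e -> 0 < e ->
  rpow x q <= Rpower e (q - p) * rpow x p.
Proof. intros Hp [[Hx| <-] Hxe] He.
 - rewrite !rpow_pos by lra. replace q with ((q - p) + p) at 1 by ring.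
   rewrite Rpower_plus. apply Rmult_le_compat_r. left; apply Rpower_pos.
   apply Rle_Rpower_l; lra.
 - rewrite !rpow_0. lra. Qed.
Lemma rpow_big x e p : 0 <= p -> 0 < e < x -> Rpower e p <= rpow x p.
Proof. intros. rewrite rpow_pos by lra. apply Rle_Rpower_l; lra. Qed.

Lemma Rinf_glb (E : R -> Prop) : (exists x, E x) -> (exists m, forall x, E x -> m <= x) ->
  is_glb E (Rinf E).
Proof. intros Hne Hb. unfold Rinf. apply epsilon_spec.
 destruct Hb as [m Hm].
 destruct (completeness (fun y => E (- y))) as [u [Hu1 Hu2]].
 - exists (- m). intros y Hy. specialize (Hm _ Hy). lra.
 - destruct Hne as [x Hx]. exists (- x). now rewrite Ropp_involutive.
 - exists (- u). split.
   + intros x Hx. assert (- x <= u). { apply Hu1. now rewrite Ropp_involutive. } lra.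
   + intros b Hb'. assert (u <= - b). { apply Hu2. intros y Hy. specialize (Hb' _ Hy). lra. } lra.
Qed.

Lemma div_nn a b : 0 <= a -> 0 < b -> 0 <= a / b.
Proof. intros. unfold Rdiv; apply Rmult_le_pos; auto. left; apply Rinv_0_lt_compat; auto. Qed.

Section M.
Context {X : TopSpace} (S : list (X -> Prop)).

Lemma ell_eq rho g : ell S rho g =
  sumL S (fun s => if excluded_middle_informative (meets g s) then rho s else 0).
Proof. reflexivity. Qed.
Lemma Vp_eq p rho : Vp S p rho = sumL S (fun s => rpow (rho s) p).
Proof. reflexivity. Qed.

Definition nonnegS (rho : (X -> Prop) -> R) := forall s, In s S -> 0 <= rho s.

Lemma ell_le rho rho' g : (forall s, In s S -> rho s <= rho' s) -> ell S rho g <= ell S rho' g.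
Proof. intros H. rewrite !ell_eq. apply sumL_le. intros s Hs.
 destruct excluded_middle_informative; auto; lra. Qed.
Lemma ell_nonneg rho g : nonnegS rho -> 0 <= ell S rho g.
Proof. intros H. rewrite ell_eq. apply sumL_nonneg. intros s Hs.
 destruct excluded_middle_informative; auto; lra. Qed.
Lemma ell_div rho g L : ell S (fun s => rho s / L) g = ell S rho g / L.
Proof. rewrite !ell_eq. unfold Rdiv. rewrite Rmult_comm, <- sumL_scal.
 apply sumL_ext. intros s _. destruct excluded_middle_informative; ring. Qed.

Lemma Lrho_lower rho Gam g : nonnegS rho -> Gam g -> Lrho S rho Gam <= ell S rho g.
Proof. intros Hn Hg. unfold Lrho.
 destruct (Rinf_glb (fun l => exists g, Gam g /\ l = ell S rho g)) as [H1 _].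
 - exists (ell S rho g); eauto.
 - exists 0. intros x [g' [_ ->]]. now apply ell_nonneg.
 - apply H1. eauto. Qed.
Lemma Lrho_ge rho Gam c : nonnegS rho -> (exists g, Gam g) ->
  (forall g, Gam g -> c <= ell S rho g) -> c <= Lrho S rho Gam.
Proof. intros Hn [g Hg] H. unfold Lrho.
 destruct (Rinf_glb (fun l => exists g, Gam g /\ l = ell S rho g)) as [_ H2].
 - exists (ell S rho g); eauto.
 - exists 0. intros x [g' [_ ->]]. now apply ell_nonneg.
 - apply H2. intros x [g' [Hg' ->]]. auto. Qed.

Lemma Vp_nonneg p rho : 0 <= Vp S p rho.
Proof. rewrite Vp_eq. apply sumL_nonneg. intros; apply rpow_nonneg. Qed.

Lemma ell_pos_ex rho g : 0 < ell S rho g -> exists s, In s S /\ 0 < rho s.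
Proof. intros H. apply NNPP; intros Hn.
 assert (ell S rho g <= 0). { rewrite ell_eq. apply Rle_trans with (sumL S (fun _ => 0)); [|rewrite sumL_zero; lra].
   apply sumL_le. intros s Hs. destruct excluded_middle_informative; [|lra].
   apply Rnot_lt_le. intros Hc. apply Hn; exists s; split; auto. }
 lra. Qed.

Lemma modp_le p Gam sigma : 0 < p -> (exists g, Gam g) -> nonnegS sigma ->
  (forall g, Gam g -> 1 <= ell S sigma g) -> modp S p Gam <= Vp S p sigma.
Proof. intros Hp Hne Hn Hell.
 assert (HL : 1 <= Lrho S sigma Gam) by (apply Lrho_ge; auto).
 assert (HV : 0 < Vp S p sigma).
 { destruct Hne as [g Hg]. destruct (ell_pos_ex sigma g) as [s [Hs Hs']].
   specialize (Hell g Hg); lra.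
   eapply Rlt_le_trans; [|apply (sumL_ge_term S (fun s => rpow (sigma s) p) s)]; auto.
   rewrite rpow_pos by auto. apply Rpower_pos. intros; apply rpow_nonneg. }
 set (P := Rpower (Lrho S sigma Gam) p).
 assert (HP : 1 <= P). { rewrite <- (Rpower_1base p). apply Rle_Rpower_l; lra. }
 unfold modp. destruct excluded_middle_informative as [_|]; [|contradiction].
 destruct (Rinf_glb (fun r => exists rho, in_Mp S p rho /\ 0 < Lrho S rho Gam /\
      r = Vp S p rho / Rpower (Lrho S rho Gam) p)) as [H1 _].
 - exists (Vp S p sigma / P). exists sigma. repeat split; auto. lra.
 - exists 0. intros x [rho [_ [_ ->]]]. pose proof (Vp_nonneg p rho).
   pose proof (Rpower_pos (Lrho S rho Gam) p).
   apply div_nn; lra.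
 - eapply Rle_trans. apply H1. exists sigma. repeat split; auto; try lra. fold P.
   assert (Vp S p sigma / P * P = Vp S p sigma) by (field; lra).
   assert (0 <= Vp S p sigma / P) by (apply div_nn; lra). nra.
Qed.

Lemma modp_approx p Gam d : finite_cover S -> 0 < p -> (exists g, Gam g) -> 0 < d ->
  exists sigma, nonnegS sigma /\ (forall g, Gam g -> 1 <= ell S sigma g) /\
     Vp S p sigma <= modp S p Gam + d.
Proof. intros [_ Hcov] Hp Hne Hd.
 set (E := fun r => exists rho, in_Mp S p rho /\ 0 < Lrho S rho Gam /\
      r = Vp S p rho / Rpower (Lrho S rho Gam) p).
 assert (Hone : forall g, Gam g -> 1 <= ell S (fun _ => 1) g).
 { intros g Hg. destruct (Hcov (g 0)) as [s [Hs Hgs]].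
   pose proof (sumL_ge_term S (fun s' => if excluded_middle_informative (meets g s') then 1 else 0) s) as H.
   rewrite ell_eq. eapply Rle_trans; [|apply H]; auto.
   - destruct excluded_middle_informative as [|n]; [lra|]. exfalso; apply n.
     exists 0. split; auto. unfold unit_interval; lra.
   - intros; destruct excluded_middle_informative; lra. }
 assert (Hnn1 : nonnegS (fun _ => 1)) by (intros s _; lra).
 assert (HEne : exists r, E r).
 { assert (HL : 1 <= Lrho S (fun _ => 1) Gam) by (apply Lrho_ge; auto).
   eexists; exists (fun _ => 1). split; [split; auto|split; [lra|reflexivity]].
   destruct Hne as [g Hg]. destruct (Hcov (g 0)) as [s [Hs _]].
   eapply Rlt_le_trans; [|rewrite Vp_eq; apply (sumL_ge_term S (fun s => rpow 1 p) s)]; auto.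
   rewrite rpow_pos by lra. apply Rpower_pos. intros; apply rpow_nonneg. }
 assert (Hglb : is_glb E (modp S p Gam)).
 { unfold modp. destruct excluded_middle_informative as [_|]; [|contradiction].
   apply Rinf_glb; auto. exists 0. intros x [rho [_ [_ ->]]]. pose proof (Vp_nonneg p rho).
   pose proof (Rpower_pos (Lrho S rho Gam) p). apply div_nn; lra. }
 assert (Hex : exists r, E r /\ r < modp S p Gam + d).
 { apply NNPP; intros Hn. destruct Hglb as [_ H2].
   assert (modp S p Gam + d <= modp S p Gam); [|lra].
   apply H2. intros x Hx. apply Rnot_lt_le. intros Hlt. apply Hn; eauto. }
 destruct Hex as [r [[rho [[Hn HV] [HL ->]]] Hr]].
 set (L := Lrho S rho Gam) in *.
 exists (fun s => rho s / L). split; [|split].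
 - intros s Hs. apply div_nn; auto.
 - intros g Hg. rewrite ell_div. pose proof (Lrho_lower rho Gam g Hn Hg). fold L in H.
   apply (Rmult_le_reg_r L); auto. unfold Rdiv. rewrite Rmult_assoc, Rinv_l; lra.
 - rewrite Vp_eq. erewrite sumL_ext.
   2:{ intros s Hs. rewrite rpow_div by auto. unfold Rdiv. rewrite Rmult_comm. reflexivity. }
   rewrite sumL_scal. rewrite <- Vp_eq. unfold Rdiv in Hr. lra.
Qed.
End M.

Lemma maxL_base {A} (l : list A) (h : A -> R) b : b <= fold_right (fun t acc => Rmax (h t) acc) b l.
Proof. induction l; simpl. lra. eapply Rle_trans; [exact IHl|apply Rmax_r]. Qed.
Lemma maxL_ge {A} (l : list A) (h : A -> R) b t : In t l -> h t <= fold_right (fun t acc => Rmax (h t) acc) b l.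
Proof. induction l; simpl; intros Ht. contradiction. destruct Ht as [<-|Ht]. apply Rmax_l.
 eapply Rle_trans; [apply IHl; auto|apply Rmax_r]. Qed.
Lemma maxL_rpow {A} (l : list A) (h : A -> R) b q :
  rpow (fold_right (fun t acc => Rmax (h t) acc) b l) q <= rpow b q + sumL l (fun t => rpow (h t) q).
Proof. induction l; simpl. lra. eapply Rle_trans; [apply rpow_max|]. lra. Qed.

Lemma lim_arg x y K : (forall d, 0 < d <= 1 -> x <= y + d * K) -> x <= y.
Proof. intros H. apply Rnot_lt_le; intros Hlt.
 set (e := (x - y) / (2 * (Rabs K + 1))) .
 assert (HK : 0 <= Rabs K) by apply Rabs_pos.
 assert (He : e * (2 * (Rabs K + 1)) = x - y) by (unfold e; field; lra).
 assert (Hepos : 0 < e) by (unfold e; apply Rdiv_lt_0_compat; lra).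
 set (d := Rmin 1 e).
 assert (Hd1 : d <= 1) by apply Rmin_l. assert (Hde : d <= e) by apply Rmin_r.
 assert (Hd0 : 0 < d) by (unfold d; apply Rmin_glb_lt; lra).
 specialize (H d (conj Hd0 Hd1)).
 assert (d * K <= d * Rabs K) by (apply Rmult_le_compat_l; [lra| apply Rle_abs]).
 assert (d * Rabs K <= e * Rabs K) by (apply Rmult_le_compat_r; lra).
 lra. Qed.

Section C.
Context {X : TopSpace} (S : list (X -> Prop)).

Lemma core p q eps d Gam sigma : finite_cover S -> 0 < p <= q -> 0 < eps -> 0 < d ->
  (exists g, Gam g) -> nonnegS S sigma -> (forall g, Gam g -> 1 <= ell S sigma g) ->
  modp S q Gam <= (Rpower eps (q - p) + / Rpower eps p *
      (supS S (fun s => modp S q (subfam Gam s)) + d)) * Vp S p sigma.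
Proof.
 intros Hcov Hp Heps Hd Hne Hn Hell.
 set (M := fun t => modp S q (subfam Gam t)).
 set (P := fun t tau => nonnegS S tau /\ (forall g, subfam Gam t g -> 1 <= ell S tau g) /\
            Vp S q tau <= M t + d).
 assert (Htau : forall t, exists tau, P t tau).
 { intro t. destruct (classic (exists g, subfam Gam t g)) as [He|He].
   - apply modp_approx; auto; lra.
   - exists (fun _ => 0). split; [intros s _; lra|split].
     + intros g Hg; exfalso; eauto.
     + rewrite Vp_eq. rewrite (sumL_ext _ _ (fun _ => 0)) by (intros; apply rpow_0).
       rewrite sumL_zero. unfold M, modp. destruct excluded_middle_informative; [contradiction|lra]. }
 set (tau := fun t => epsilon (inhabits (fun _ : X -> Prop => 0)) (P t)).
 assert (Ht : forall t, P t (tau t)) by (intro t; apply epsilon_spec; apply Htau).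
 set (small := fun s => if Rle_dec (sigma s) eps then sigma s else 0).
 set (h := fun t s => if Rle_dec (sigma t) eps then 0 else tau t s).
 set (rho := fun s => fold_right (fun t acc => Rmax (h t s) acc) (small s) S).
 assert (Hsmall : nonnegS S small).
 { intros s Hs. unfold small. destruct Rle_dec; [apply Hn; auto|lra]. }
 assert (Hrn : nonnegS S rho).
 { intros s Hs. apply Rle_trans with (small s). apply Hsmall; auto. apply maxL_base. }
 assert (Hrell : forall g, Gam g -> 1 <= ell S rho g).
 { intros g Hg.
   destruct (classic (exists t, In t S /\ ~ sigma t <= eps /\ meets g t)) as [[t [Hin [Hbig Hm]]]|Hno].
   - destruct (Ht t) as [_ [Ht2 _]].
     eapply Rle_trans; [apply (Ht2 g); split; auto|]. apply ell_le. intros s Hs.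
     replace (tau t s) with (h t s) by (unfold h; destruct Rle_dec; [contradiction|auto]).
     apply (maxL_ge S (fun t => h t s)); auto.
   - eapply Rle_trans; [apply (Hell g Hg)|]. apply Rle_trans with (ell S small g).
     + right. rewrite !ell_eq. apply sumL_ext. intros s Hs.
       destruct excluded_middle_informative; auto. unfold small; destruct Rle_dec; auto.
       exfalso; apply Hno; eauto.
     + apply ell_le. intros s Hs. apply maxL_base. }
 eapply Rle_trans; [apply (modp_le S q Gam rho); auto; lra|].
 set (A := Rpower eps (q - p)). set (B := / Rpower eps p).
 set (C := supS S M). set (V := Vp S p sigma).
 assert (HA : 0 < A) by apply Rpower_pos.
 assert (HB : 0 < B) by (apply Rinv_0_lt_compat, Rpower_pos).
 assert (HC : 0 <= C) by apply supL_nonneg.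
 assert (H1 : sumL S (fun s => rpow (small s) q) <= A * V).
 { unfold V. rewrite Vp_eq, <- sumL_scal. apply sumL_le. intros s Hs.
   unfold small; destruct Rle_dec.
   - assert (0 <= sigma s) by (apply Hn; auto). apply rpow_small; lra.
   - rewrite rpow_0. apply Rmult_le_pos; [lra|apply rpow_nonneg]. }
 assert (H2 : sumL S (fun t => sumL S (fun s => rpow (h t s) q)) <= B * (C + d) * V).
 { unfold V. rewrite Vp_eq, <- sumL_scal. apply sumL_le. intros t Hin.
   unfold h; destruct Rle_dec.
   - rewrite (sumL_ext _ _ (fun _ => 0)) by (intros; apply rpow_0). rewrite sumL_zero.
     apply Rmult_le_pos; [apply Rmult_le_pos; lra|apply rpow_nonneg].
   - destruct (Ht t) as [_ [_ Ht3]]. rewrite <- Vp_eq.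
     assert (HM : M t <= C) by (apply supL_ge; auto).
     assert (HBr : 1 <= B * rpow (sigma t) p).
     { apply (Rmult_le_reg_l (Rpower eps p)); [apply Rpower_pos|].
       unfold B. rewrite <- Rmult_assoc, Rinv_r, Rmult_1_l, Rmult_1_r.
       apply rpow_big; lra. apply Rgt_not_eq, Rpower_pos. }
     replace (B * (C + d) * rpow (sigma t) p) with ((C + d) * (B * rpow (sigma t) p)) by ring.
     nra. }
 rewrite Vp_eq. eapply Rle_trans.
 { apply (sumL_le _ _ (fun s => rpow (small s) q + sumL S (fun t => rpow (h t s) q))).
   intros s _. apply (maxL_rpow S (fun t => h t s)). }
 rewrite sumL_add, sumL_swap.
 replace ((A + B * (C + d)) * V) with (A * V + B * (C + d) * V) by ring. lra.
Qed.
End C.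

Theorem proposition4p9 (X : TopSpace) (S : list (X -> Prop))
  (Gam : (R -> X) -> Prop) (p q : R) :
  finite_cover S ->
  (forall g, Gam g -> is_curve X g) ->
  1 <= p -> p <= q ->
  forall eps : R, 0 < eps ->
  modp S q Gam <=
    (Rpower eps (q - p) + / Rpower eps p * supS S (fun s => modp S q (subfam Gam s)))
    * modp S p Gam.
Proof.
 intros Hcov _ Hp Hpq eps Heps.
 destruct (classic (exists g, Gam g)) as [Hne|Hne].
 2:{ assert (forall r, modp S r Gam = 0) as Hz.
     { intro r. unfold modp. destruct excluded_middle_informative; [contradiction|auto]. }
     rewrite !Hz. lra. }
 set (A := Rpower eps (q - p)). set (B := / Rpower eps p).
 set (C := supS S (fun s => modp S q (subfam Gam s))).
 set (m := modp S p Gam).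
 assert (HA : 0 < A) by apply Rpower_pos.
 assert (HB : 0 < B) by (apply Rinv_0_lt_compat, Rpower_pos).
 assert (HC : 0 <= C) by apply supL_nonneg.
 assert (key : forall d, 0 < d -> modp S q Gam <= (A + B * (C + d)) * (m + d)).
 { intros d Hd. destruct (modp_approx S p Gam d) as [sigma [Hn [Hell HV]]]; auto; try lra.
   eapply Rle_trans; [apply (core S p q eps d Gam sigma); auto; lra|].
   apply Rmult_le_compat_l; [|exact HV]. fold A B C. nra. }
 apply (lim_arg _ _ (A + B * C + B * m + B)). intros d [Hd0 Hd1].
 specialize (key d Hd0).
 assert (B * d * d <= B * d) by (rewrite Rmult_assoc; apply Rmult_le_compat_l; nra).
 replace ((A + B * (C + d)) * (m + d)) with ((A + B * C) * m + d * (A + B * C + B * m) + B * d * d) in key by ring.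
 lra.
Qed.
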